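(* Let $p \geq 1$ and $a \geq 0$ be integers, and let $a_{\max}(p) = \lfloor \frac{p^2}{4} \rfloor$. Then: (i) If $a < p-1$, then $H_c(p,a) = 0$. (ii) If $a > a_{\max}(p)$, then $H(p,a) = 0$. Moreover, $$H(p, a_{\max}(p)) = \begin{cases} p, & \text{if } p \text{ is odd},\\ \frac{p}{2}, & \text{if } p \text{ is even}.\end{cases}$$ (iii) If $a_{\max}(p-1) < a \leq a_{\max}(p)$, then $H(p,a) = H_c(p,a)$.
   Context: For a finite poset, the Hasse diagram is the directed graph on its points whose arcs are the covering pairs $x \to y$ ($x < y$ with no $w$ satisfying $x < w < y$). Posets are counted up to isomorphism (unlabeled). $H(p,a)$ denotes the number of isomorphism classes of posets with $p$ points whose Hasse diagram has exactly $a$ arcs, and $H_c(p,a)$ denotes the number of those that are connected (i.e., whose Hasse diagram, viewed as an undirected graph, is connected). *)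

(* Defs.v *)
From mathcomp Require Import all_boot all_fingroup.
Set Implicit Arguments. Unset Strict Implicit. Unset Printing Implicit Defensive.

Definition prel (p : nat) := {ffun 'I_p * 'I_p -> bool}.

Definition is_porder (p : nat) (R : prel p) : bool :=
  [&& [forall x, R (x, x)],
      [forall x, forall y, (R (x, y) && R (y, x)) ==> (x == y)] &
      [forall x, forall y, forall z, (R (x, y) && R (y, z)) ==> R (x, z)]].

Definition covers (p : nat) (R : prel p) (x y : 'I_p) : bool :=
  [&& x != y, R (x, y) &
      ~~ [exists w, [&& w != x, w != y, R (x, w) & R (w, y)]]].

Definition narcs (p : nat) (R : prel p) : nat :=
  #|[set e : 'I_p * 'I_p | covers R e.1 e.2]|.

Definition hasse_connected (p : nat) (R : prel p) : bool :=
  [forall x, forall y, connect (fun u v => covers R u v || covers R v u) x y].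

Definition poset_iso (p : nat) (R S : prel p) : bool :=
  [exists s : {perm 'I_p}, [forall x, forall y, S (s x, s y) == R (x, y)]].

Definition H (p a : nat) : nat :=
  #|equivalence_partition (@poset_iso p)
      [set R : prel p | is_porder R && (narcs R == a)]|.

Definition Hc (p a : nat) : nat :=
  #|equivalence_partition (@poset_iso p)
      [set R : prel p | [&& is_porder R, narcs R == a & hasse_connected R]]|.

Definition amax (p : nat) : nat := (p ^ 2) %/ 4.

(* Main.v *)
Require Import Defs.
From mathcomp Require Import all_boot all_fingroup.
From mathcomp Require Import zify.
Set Implicit Arguments. Unset Strict Implicit. Unset Printing Implicit Defensive.

Definition adjR p (R : prel p) (u v : 'I_p) := covers R u v || covers R v u.

Lemma adjR_sym p (R : prel p) u v : adjR R u v = adjR R v u.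
Proof. by rewrite /adjR orbC. Qed.

Lemma covers_neq p (R : prel p) u v : covers R u v -> u != v.
Proof. by case/and3P. Qed.

Lemma adjR_neq p (R : prel p) u v : adjR R u v -> u != v.
Proof. by case/orP=> /covers_neq //; rewrite eq_sym. Qed.

Section PartA.
Variables (p : nat) (R : prel p) (r : 'I_p).
Local Notation adj := (adjR R).

Fixpoint reach (k : nat) : {set 'I_p} :=
  if k is k'.+1 then reach k' :|: [set v | [exists w in reach k', adj v w]]
  else [set r].

Lemma reach_path s v : path adj v s -> last v s = r -> v \in reach (size s).
Proof.
elim: s v => [|w s IH] v /=; first by move=> _ ->; rewrite inE.
case/andP=> avw pw lw; rewrite inE; apply/orP; right; rewrite inE.
by apply/existsP; exists w; rewrite IH.
Qed.

Lemma conn_narcs : (forall v, connect adj v r) -> p.-1 <= narcs R.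
Proof.
move=> conn.
have ex v : exists k, v \in reach k.
  have /connectP[s ps ls] := conn v; exists (size s); exact: reach_path.
pose d v := ex_minn (ex v).
have par_ex v : v != r -> exists w, adj v w && (d w < d v).
  move=> vr; rewrite /d; case: ex_minnP=> k vk kmin.
  case: k vk kmin => [|k] /=; first by rewrite inE (negbTE vr).
  rewrite inE => /orP[vk|]; first by move=> /(_ _ vk); rewrite ltnn.
  rewrite inE => /existsP[w /andP[wk avw]] kmin; exists w; rewrite avw /=.
  case: ex_minnP => j wj jmin; by rewrite ltnS jmin.
pose par v := odflt v [pick w | adj v w && (d w < d v)].
have parP v : v != r -> adj v (par v) && (d (par v) < d v).
  move=> /par_ex [w hw]; rewrite /par; case: pickP => [w' //|/(_ w)]; by rewrite hw.
pose f v := if covers R v (par v) then (v, par v) else (par v, v).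
have fE v : v != r -> covers R (f v).1 (f v).2.
  move=> /parP /andP[+ _]; rewrite /f /adjR; by case: ifP.
have finj : {in [set~ r] &, injective f}.
  move=> u v; rewrite !inE => /parP /andP[_ hu] /parP /andP[_ hv].
  have C : (v == par u) && (u == par v) -> False.
    case/andP=> /eqP e1 /eqP e2; move: hu hv; rewrite -e1 -e2 => hu hv.
    by have := ltn_trans hu hv; rewrite ltnn.
  rewrite /f; case: ifP => _; case: ifP => _ [] e1 e2 //; exfalso; apply: C;
  by apply/andP; split; apply/eqP => //; symmetry.
have := card_in_imset finj; rewrite cardsC1 card_ord => <-.
apply: subset_leq_card; apply/subsetP => _ /imsetP[v vr ->]; rewrite inE; apply: fE.
by move: vr; rewrite !inE.
Qed.
End PartA.

Section PartB.
Variables (p : nat) (R : prel p) (hR : is_porder R).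
Local Notation adj := (adjR R).

Lemma po_refl x : R (x, x).
Proof. by case/and3P: hR => /forallP. Qed.
Lemma po_anti x y : R (x, y) -> R (y, x) -> x = y.
Proof. case/and3P: hR => _ /forallP /(_ x) /forallP /(_ y) /implyP h _ a b.
by apply/eqP/h; rewrite a b. Qed.
Lemma po_trans x y z : R (x, y) -> R (y, z) -> R (x, z).
Proof. case/and3P: hR => _ _ /forallP /(_ x) /forallP /(_ y) /forallP /(_ z) /implyP h a b.
by apply/h; rewrite a b. Qed.

Lemma covers_R x y : covers R x y -> R (x, y).
Proof. by case/and3P. Qed.

Lemma covers_asym x y : covers R x y -> ~~ covers R y x.
Proof.
move=> c; apply/negP => c'; have := po_anti (covers_R c) (covers_R c').
by move/eqP; rewrite (negbTE (covers_neq c)).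
Qed.

Lemma chain x y z : covers R x y -> covers R y z -> ~~ adj x z.
Proof.
move=> cxy cyz; rewrite /adjR negb_or; apply/andP; split.
  apply/negP => /and3P[_ _ /negP]; apply; apply/existsP; exists y.
  rewrite (covers_R cxy) (covers_R cyz) eq_sym (covers_neq cxy) (covers_neq cyz) //.
apply/negP => czx.
have rxz := po_trans (covers_R cxy) (covers_R cyz).
have := po_anti rxz (covers_R czx) => exz; move: czx; rewrite exz.
by move/covers_neq; rewrite eqxx.
Qed.

Lemma triangle u v w : adj u v -> adj v w -> adj u w -> False.
Proof.
have ch := chain; rewrite /adjR.
case/orP=> a; case/orP=> b; case/orP=> c;
  by [ move: (ch _ _ _ a b); rewrite /adjR ?a ?b ?c ?orbT
     | move: (ch _ _ _ b a); rewrite /adjR ?a ?b ?c ?orbT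
     | move: (ch _ _ _ a c); rewrite /adjR ?a ?b ?c ?orbT
     | move: (ch _ _ _ c a); rewrite /adjR ?a ?b ?c ?orbT
     | move: (ch _ _ _ b c); rewrite /adjR ?a ?b ?c ?orbT
     | move: (ch _ _ _ c b); rewrite /adjR ?a ?b ?c ?orbT ].
Qed.

Definition E2 (S : {set 'I_p}) :=
  [set e : 'I_p * 'I_p | [&& adj e.1 e.2, e.1 \in S & e.2 \in S]].

Definition swap (e : 'I_p * 'I_p) := (e.2, e.1).
Lemma swap_inj : injective swap.
Proof. by move=> [a b] [c d] [-> ->]. Qed.

Lemma E2T_card : #|E2 setT| = 2 * narcs R.
Proof.
pose Ec := [set e : 'I_p * 'I_p | covers R e.1 e.2].
have -> : E2 setT = Ec :|: swap @: Ec.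
  apply/setP => -[x y]; rewrite !inE /=; apply/idP/idP.
    case/andP=> /orP[->//|c] _; apply/orP; right; apply/imsetP; exists (y, x) => //.
    by rewrite inE.
  case/orP=> [c|/imsetP[[a b] + [-> ->]]]; first by rewrite /adjR c.
  by rewrite inE /adjR /= => ->; rewrite orbT.
have dis : Ec :&: swap @: Ec = set0.
  apply/setP => -[x y]; rewrite !inE /=; apply/negP => /andP[c /imsetP[[a b] + [ex ey]]].
  by rewrite inE /= -ex -ey => c'; move: (covers_asym c); rewrite c'.
have := cardsUI Ec (swap @: Ec); rewrite dis cards0 addn0 card_imset; last exact: swap_inj.
by move=> ->; rewrite /narcs addnn -mul2n.
Qed.

Definition NS (S : {set 'I_p}) v := [set w in S | adj v w].

Lemma sum_le_eq (I : finType) (B : {set I}) (f : I -> nat) c :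
  (forall i, i \in B -> f i <= c) -> \sum_(i in B) f i = #|B| * c ->
  forall i, i \in B -> f i = c.
Proof.
move=> le eqs i iB; apply/eqP; rewrite eqn_leq le //=; apply/negP => /negP; rewrite -ltnNge => lt.
move: eqs; rewrite (bigD1 i) //= => eqs.
have : \sum_(j in B | j != i) f j <= (#|B| - 1) * c.
  have e : \sum_(j in B | j != i) c = \sum_(j in B :\ i) c.
    by apply: eq_bigl => j; rewrite !inE andbC.
  have cd := cardsD1 i B; rewrite iB in cd.
  have -> : (#|B| - 1) * c = \sum_(j in B | j != i) c by rewrite e sum_nat_const cd add1n subn1.
  by apply: leq_sum => j /andP[jB _]; apply: le.
have : 0 < #|B| by apply/card_gt0P; exists i.
nia.
Qed.

Lemma mantel_count (S A : {set 'I_p}) : A \subset S -> {in A &, forall u v, ~~ adj u v} ->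
  (forall v, v \in S -> #|NS S v| <= #|A|) ->
  #|E2 S| <= 2 * (#|S :\: A| * #|A|) /\
  (#|E2 S| = 2 * (#|S :\: A| * #|A|) ->
     (forall v w, v \in S :\: A -> w \in S -> adj v w -> w \in A) /\
     (forall v, v \in S :\: A -> #|NS S v| = #|A|)).
Proof.
move=> AS indep degle.
set B := S :\: A.
pose F := [set e : 'I_p * 'I_p | e.1 \in B].
pose Ein := E2 S :&: F; pose Eout := E2 S :\: F.
have split : #|E2 S| = #|Ein| + #|Eout| by rewrite cardsID.
have sw_sub : swap @: Eout \subset Ein.
  apply/subsetP => _ /imsetP[[x y] + ->]; rewrite !inE /= => /andP[xB /and3P[axy xS yS]].
  rewrite adjR_sym axy yS xS /= andbT; apply/negP => yA.
  have xA : x \in A by move: xB; rewrite xS andbT negbK.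
  by move: (indep _ _ xA yA); rewrite axy.
have outle : #|Eout| <= #|Ein|.
  by rewrite -(card_imset _ swap_inj); apply: subset_leq_card.
have Ein_sum : #|Ein| = \sum_(v in B) #|NS S v|.
  have := @pair_big_dep nat 0 addn _ _ (fun v => v \in B) (fun v w => (w \in S) && adj v w) (fun _ _ => 1).
  rewrite sum1dep_card => H.
  have -> : #|Ein| = #|[set x : 'I_p * 'I_p | (x.1 \in B) && ((x.2 \in S) && adj x.1 x.2)]|.
    apply: eq_card => -[x y]; rewrite !inE /=.
    by case: (adj x y); case: (x \in S); case: (y \in S); case: (x \in A).
  rewrite -H; apply: eq_bigr => v vB; rewrite sum1dep_card.
  by apply: eq_card => w; rewrite !inE.
have sumle : \sum_(v in B) #|NS S v| <= #|B| * #|A|.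
  rewrite -sum_nat_const; apply: leq_sum => v; rewrite inE => /andP[_]; exact: degle.
split; first by lia.
move=> heq; split.
  have eqc : #|Eout| = #|Ein| by lia.
  have := subset_cardP _ sw_sub; rewrite card_imset; last exact: swap_inj.
  move=> /(_ eqc) eqs v w vB wS avw; apply: contraT => wA.
  have : (v, w) \in Ein by move: vB; rewrite !inE /= avw wS => /andP[-> ->].
  rewrite -eqs => /imsetP[[a b]]; rewrite !inE /= => /andP[aB _] [ev ew].
  by move: aB; rewrite -ew wA wS.
apply: sum_le_eq; last by lia.
by move=> v; rewrite inE => /andP[_]; exact: degle.
Qed.


Lemma amax_bound n x : x <= n -> (n - x) * x <= amax n.
Proof.
move=> le; rewrite /amax leq_divRL //.
have [d ->] : exists d, n = x + d by exists (n - x); lia.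
rewrite addKn; have := leq0n ((x - d) * (x - d)); have := leq0n ((d - x) * (d - x)).
have: x <= d \/ d <= x by lia.
case=> h.
  have [e ->] : exists e, d = x + e by exists (d - x); lia. nia.
have [e ->] : exists e, x = d + e by exists (x - d); lia. nia.
Qed.

Lemma pick_A (S : {set 'I_p}) x : x \in S ->
  exists A : {set 'I_p}, [/\ A \subset S, {in A &, forall u v, ~~ adj u v},
     (forall v, v \in S -> #|NS S v| <= #|A|) & A = NS S x \/ True].
Proof.
move=> xS.
case: (@arg_maxnP _ x (fun v => v \in S) (fun v => #|NS S v|) xS) => y yS ymax.
exists (NS S y); split => //; last by right.
- by apply/subsetP => v; rewrite inE => /andP[].
- move=> u v; rewrite !inE => /andP[_ ayu] /andP[_ ayv]; apply/negP => auv.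
  exact: (triangle ayu auv (ayv : adj y v)).
Qed.

Lemma mantel (S : {set 'I_p}) : #|E2 S| <= 2 * amax #|S|.
Proof.
case: (set_0Vmem S) => [->|[x xS]].
  rewrite cards0 leqn0 cards_eq0; apply/eqP/setP => -[u v]; by rewrite !inE /= andbF.
have [A [AS ind deg _]] := pick_A xS.
have [le _] := mantel_count AS ind deg.
apply: (leq_trans le); rewrite leq_mul2l /= cardsD (setIidPr AS).
by apply: amax_bound; apply: subset_leq_card.
Qed.

Lemma mantel_eq : 1 < p -> #|E2 setT| = 2 * amax p ->
  exists A : {set 'I_p}, [/\ A != set0, A != setT &
     forall u v, adj u v = ((u \in A) != (v \in A))].
Proof.
move=> p1 heq.
have x : 'I_p := Ordinal (ltnW p1).
have [A [AS ind deg _]] := pick_A (in_setT x).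
have [le eqp] := mantel_count AS ind deg.
have cB : #|setT :\: A| = p - #|A| by rewrite cardsD (setIidPr AS) cardsT card_ord.
have Ap : #|A| <= p by have := max_card A; rewrite card_ord.
have bnd := amax_bound Ap.
have am1 : 1 <= amax p by rewrite /amax leq_divRL //; nia.
have e2' : 2 * ((p - #|A|) * #|A|) = 2 * amax p.
  move: le bnd; rewrite cB heq; move: ((p - #|A|) * #|A|) => t; lia.
have e2 : #|E2 setT| = 2 * (#|setT :\: A| * #|A|) by rewrite cB e2' heq.
have [h1 h2] := eqp e2.
have A0 : 0 < #|A| by move: e2; rewrite cB; nia.
have B0 : #|A| < p by move: e2; rewrite cB; nia.
exists A; split.
- by rewrite -card_gt0.
- apply/negP => /eqP AT; move: B0; by rewrite AT cardsT card_ord ltnn.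
have key u v : u \notin A -> adj u v = (v \in A).
  move=> uA; have uB : u \in setT :\: A by rewrite !inE uA.
  apply/idP/idP; first by apply: h1 => //; exact: in_setT.
  move=> vA.
  have sub : NS setT u \subset A.
    by apply/subsetP => w; rewrite inE => /andP[_ ]; apply: h1 => //; exact: in_setT.
  move/(subset_cardP (h2 _ uB)): sub => eqs.
  by move: (eqs v); rewrite vA inE => /andP[].
move=> u v; case uA: (u \in A); case vA: (v \in A) => /=.
- by apply/negbTE/ind.
- by rewrite adjR_sym key ?vA ?uA.
- by rewrite key ?uA.
- by rewrite key ?uA.
Qed.

End PartB.

Section Abstract.
Variables (T : finType) (lt cov : rel T) (side : pred T).
Hypothesis lt_tr : forall x y z, lt x y -> lt y z -> lt x z.
Hypothesis lt_irr : forall x, lt x x = false.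
Hypothesis cov_lt : forall x y, cov x y -> lt x y.
Hypothesis cov_no : forall x y w, cov x y -> lt x w -> lt w y -> False.
Hypothesis diff_adj : forall x y, side x != side y -> cov x y || cov y x.
Hypothesis sideT : exists a, side a.
Hypothesis sideF : exists b, ~~ side b.

Lemma lt_asym x y : lt x y -> lt y x -> False.
Proof. by move=> a b; move: (lt_tr a b); rewrite lt_irr. Qed.

Lemma other x : exists q, side q != side x.
Proof.
case sx: (side x); [case: sideF => b hb | case: sideT => a ha];
  [exists b | exists a]; by rewrite ?(negbTE hb) ?ha.
Qed.

Lemma KL a1 a2 b b' : side a1 = side a2 -> side b != side a1 -> side b' != side a1 ->
  lt a1 b -> lt b a2 -> lt a1 b' /\ lt b' a2.
Proof.
move=> s12 sb sb' l1 l2.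
have a2b' : side b' != side a2 by rewrite -s12.
have l12 := lt_tr l1 l2.
have := diff_adj sb'; rewrite orbC; case/orP => c1.
- have := diff_adj a2b'; case/orP => c2.
    by split; [ exact: cov_lt | exact: cov_lt ].
  have := cov_lt c2 => l2b'.
  by exfalso; apply: (cov_no c1 l12 l2b').
- exfalso; have lb'1 := cov_lt c1.
  have := diff_adj a2b'; case/orP => c2.
    have := cov_lt c2 => lb'2; exact: (cov_no c2 lb'1 l12).
  have := cov_lt c2 => l2b'.
  by apply: (lt_asym (lt_tr lb'1 l12) l2b').
Qed.

Lemma between x y : side x = side y -> lt x y -> exists b, [/\ side b != side x, lt x b & lt b y].
Proof.
move=> sxy lxy; case: (other x) => b sb; exists b.
have sby : side b != side y by rewrite -sxy.
have := diff_adj sb; have := diff_adj sby.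
case/orP=> c1; case/orP=> c2.
- exfalso; exact: (cov_no c1 (cov_lt c2) lxy).
- by split => //; apply: cov_lt.
- exfalso; exact: (lt_asym (lt_tr (cov_lt c2) lxy) (cov_lt c1)).
- exfalso; exact: (cov_no c2 lxy (cov_lt c1)).
Qed.

Lemma NM x u : lt u x -> exists q, side q != side x /\ lt q x.
Proof.
move=> lux; case: (boolP (side u == side x)) => [/eqP sux|sux]; last by exists u.
have [b [sb lub lbx]] := between sux lux; exists b; split => //.
by rewrite -sux.
Qed.

Definition isminb x := [forall u, ~~ lt u x].

Lemma same_side_min x y : side x = side y -> lt x y -> isminb x.
Proof.
move=> sxy lxy; apply/forallP => u; apply/negP => lux.
have [q [sq lqx]] := NM lux.
have [b [sb lxb lby]] := between sxy lxy.
have [lxq _] := KL sxy sb (sq : side q != side x) lxb lby.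
exact: (lt_asym lqx lxq).
Qed.

Lemma min_lt x y : isminb x -> ~~ isminb y -> x != y -> lt x y.
Proof.
move=> mx nmy xy.
have [u luy] : exists u, lt u y.
  by move: nmy; rewrite /isminb negb_forall => /existsP[u]; rewrite negbK => h; exists u.
have [q [sq lqy]] := NM luy.
have nlt z : ~~ lt z x by move/forallP: mx.
case: (boolP (side x == side y)) => [/eqP sxy | sxy].
- have sqx : side q != side x by rewrite sxy.
  have := diff_adj sqx; case/orP => c.
    by move: (nlt q); rewrite (cov_lt c).
  exact: lt_tr (cov_lt c) lqy.
- have := diff_adj sxy; case/orP => c; first exact: cov_lt.
  by move: (nlt y); rewrite (cov_lt c).
Qed.

End Abstract.

Section AbstractMain.
Variables (T : finType) (lt cov : rel T) (side : pred T).
Hypothesis lt_tr : forall x y z, lt x y -> lt y z -> lt x z.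
Hypothesis lt_irr : forall x, lt x x = false.
Hypothesis cov_lt : forall x y, cov x y -> lt x y.
Hypothesis cov_no : forall x y w, cov x y -> lt x w -> lt w y -> False.
Hypothesis diff_adj : forall x y, side x != side y -> cov x y || cov y x.
Hypothesis sideT : exists a, side a.
Hypothesis sideF : exists b, ~~ side b.

Let dlt := fun x y => lt y x.
Let dcov := fun x y => cov y x.
Let dlt_tr : forall x y z, dlt x y -> dlt y z -> dlt x z.
Proof. by move=> x y z a b; apply: lt_tr b a. Qed.
Let dcov_lt : forall x y, dcov x y -> dlt x y.
Proof. by move=> x y; apply: cov_lt. Qed.
Let dcov_no : forall x y w, dcov x y -> dlt x w -> dlt w y -> False.
Proof. by move=> x y w a b c; apply: (cov_no a c b). Qed.
Let ddiff_adj : forall x y, side x != side y -> dcov x y || dcov y x.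
Proof. by move=> x y s; rewrite /dcov orbC; apply: diff_adj. Qed.

Definition wlev x : nat := if isminb lt x then 0 else if isminb dlt x then 2 else 1.

Lemma no_mid x y : ~~ isminb lt x -> ~~ isminb dlt y -> lt x y -> False.
Proof.
move=> nmx nMy lxy.
case: (boolP (side x == side y)) => [/eqP sxy|sxy].
  by move: nmx; rewrite (same_side_min lt_tr lt_irr cov_lt cov_no diff_adj sideT sideF sxy lxy).
have [u lux] : exists u, lt u x.
  by move: nmx; rewrite /isminb negb_forall => /existsP[u]; rewrite negbK => h; exists u.
have [r lyr] : exists r, dlt r y.
  by move: nMy; rewrite /isminb negb_forall => /existsP[u']; rewrite negbK => h; exists u'.
have [q [sq lqx]] := NM lt_tr lt_irr cov_lt cov_no diff_adj sideT sideF lux.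
have [r' [sr' lyr']] := NM dlt_tr lt_irr dcov_lt dcov_no ddiff_adj sideT sideF lyr.
have sqy : side q = side y.
  by move: sq sxy; case: (side q); case: (side x); case: (side y).
have sxq : side x != side q by rewrite eq_sym.
have sr'q : side r' != side q by rewrite sqy.
have [_ lr'y] := KL lt_tr lt_irr cov_lt cov_no diff_adj sqy sxq sr'q lqx lxy.
exact: (lt_asym lt_tr lt_irr lr'y lyr').
Qed.

Lemma wlev_char x y : x != y -> lt x y = (wlev x < wlev y).
Proof.
move=> xy.
have Mlt : isminb dlt y -> ~~ isminb dlt x -> lt x y.
  move=> a b; apply: (min_lt dlt_tr lt_irr dcov_lt dcov_no ddiff_adj sideT sideF a b).
  by rewrite eq_sym.
have mlt : isminb lt x -> ~~ isminb lt y -> lt x y.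
  by move=> a b; apply: (min_lt lt_tr lt_irr cov_lt cov_no diff_adj sideT sideF a b).
case lxy: (lt x y).
- have nMx : ~~ isminb dlt x.
    by rewrite /isminb negb_forall; apply/existsP; exists y; rewrite negbK.
  have nmy : ~~ isminb lt y.
    by rewrite /isminb negb_forall; apply/existsP; exists x; rewrite negbK.
  rewrite /wlev (negbTE nMx) (negbTE nmy).
  case mx: (isminb lt x) => //; case My: (isminb dlt y) => //.
  by exfalso; apply: (no_mid _ _ lxy); rewrite ?mx ?My.
- apply/esym/negbTE; rewrite /wlev.
  case mx: (isminb lt x); case my: (isminb lt y);
    case Mx: (isminb dlt x); case My: (isminb dlt y) => //=;
  first [ by move: (mlt mx); rewrite my lxy => /(_ isT)
        | by move: (Mlt My); rewrite Mx lxy => /(_ isT) ].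
Qed.

End AbstractMain.

Definition wrel p (L : 'I_p -> nat) : prel p := [ffun e => (e.1 == e.2) || (L e.1 < L e.2)].

Section Wrel.
Variables (p : nat) (L : 'I_p -> nat).

Lemma wrel_porder : is_porder (wrel L).
Proof.
apply/and3P; split.
- by apply/forallP => x; rewrite ffunE eqxx.
- apply/forallP => x; apply/forallP => y; apply/implyP; rewrite !ffunE /=.
  case: (eqVneq x y) => [->|xy] //= /andP[]; lia.
- apply/forallP => x; apply/forallP => y; apply/forallP => z; apply/implyP; rewrite !ffunE /=.
  case: (eqVneq x y) => [->|xy] //=.
  case: (eqVneq y z) => [->|yz] /=; first by case/andP=> ->; rewrite orbT.
  case: (eqVneq x z) => [->|xz] //= /andP[]; lia.
Qed.

Lemma covers_wrel x y : covers (wrel L) x y =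
  (L x < L y) && [forall w, ~~ ((L x < L w) && (L w < L y))].
Proof.
rewrite /covers !ffunE /=.
case: (eqVneq x y) => [->|xy] /=; first by rewrite ltnn.
congr (_ && _); rewrite negb_exists; apply: eq_forallb => w.
case: (eqVneq w x) => [->|wx] /=; first by rewrite ltnn.
case: (eqVneq w y) => [->|wy] /=; first by rewrite ltnn andbF.
by rewrite !ffunE /= (negbTE wy) eq_sym (negbTE wx).
Qed.

Definition lvl (a : nat) := [set x | L x == a].

Hypothesis hL : forall x, L x <= 2.

Lemma narcs_wrel : narcs (wrel L) =
  if #|lvl 1| == 0 then #|lvl 0| * #|lvl 2| else #|lvl 0| * #|lvl 1| + #|lvl 1| * #|lvl 2|.
Proof.
rewrite /narcs.
case: ifP => c1.
  have no1 w : L w != 1.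
    apply/negP => /eqP h; move: c1; rewrite cards_eq0 => /eqP /setP /(_ w).
    by rewrite !inE h.
  rewrite -cardsX; apply: eq_card => -[x y]; rewrite !inE /= covers_wrel.
  have := hL x; have := hL y; have := no1 x; have := no1 y.
  case: (L x) => [|[|[|//]]]; case: (L y) => [|[|[|//]]] //= _ _ _ _.
  by apply/forallP => w; have := hL w; have := no1 w; lia.
have [w1 hw1] : exists w, L w == 1.
  move: c1; rewrite cards_eq0 => /set0Pn [w]; rewrite inE => h; by exists w.
have dis : setX (lvl 0) (lvl 1) :&: setX (lvl 1) (lvl 2) = set0.
  apply/setP => -[x y]; rewrite !inE /=; apply/negP => /andP[/andP[/eqP -> _] /andP[]].
  by [].
have := cardsUI (setX (lvl 0) (lvl 1)) (setX (lvl 1) (lvl 2)).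
rewrite dis cards0 addn0 !cardsX => <-.
apply: eq_card => -[x y]; rewrite !inE /= covers_wrel.
have := hL x; have := hL y.
case: (L x) => [|[|[|//]]]; case: (L y) => [|[|[|//]]] //= _ _.
- by apply/forallP => w; lia.
- apply/negP => /forallP /(_ w1); move/eqP: hw1 => ->; by [].
- by apply/forallP => w; lia.
Qed.

End Wrel.

Lemma lvl_perm p (L1 L2 : 'I_p -> nat) :
  (forall a, #|lvl L1 a| = #|lvl L2 a|) -> exists s : {perm 'I_p}, forall x, L2 (s x) = L1 x.
Proof.
move=> hc.
pose f x := nth x (enum (lvl L2 (L1 x))) (index x (enum (lvl L1 (L1 x)))).
have fin x : x \in enum (lvl L1 (L1 x)) by rewrite mem_enum inE.
have fidx x : index x (enum (lvl L1 (L1 x))) < size (enum (lvl L2 (L1 x))).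
  by rewrite -cardE -hc cardE index_mem.
have fL x : L2 (f x) = L1 x.
  have := mem_nth x (fidx x); rewrite mem_enum inE => /eqP; exact.
have finj : injective f.
  move=> x y fxy.
  have exy : L1 x = L1 y by rewrite -fL fxy fL.
  move: fxy; rewrite /f exy => fxy.
  have := fidx x; rewrite exy => hx.
  have := fidx y => hy.
  have e : nth y (enum (lvl L2 (L1 y))) (index x (enum (lvl L1 (L1 y)))) =
           nth y (enum (lvl L2 (L1 y))) (index y (enum (lvl L1 (L1 y)))).
    rewrite -fxy; apply: set_nth_default; exact: hx.
  move/eqP: e; rewrite (nth_uniq y hx hy (enum_uniq _)) => /eqP.
  apply: (index_inj x); last exact: fin.
  by rewrite mem_enum inE exy.
exists (perm finj) => x; by rewrite permE.
Qed.

Lemma wrel_iso p (L1 L2 : 'I_p -> nat) :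
  (forall a, #|lvl L1 a| = #|lvl L2 a|) -> poset_iso (wrel L1) (wrel L2).
Proof.
move=> /lvl_perm [s hs]; apply/existsP; exists s; apply/forallP => x; apply/forallP => y.
by rewrite !ffunE /= (inj_eq (@perm_inj _ s)) !hs.
Qed.

Definition ltR p (R : prel p) : rel 'I_p := fun x y => R (x, y) && (x != y).
Definition levR p (R : prel p) := wlev (ltR R).

Lemma forall_perm (T : finType) (s : {perm T}) (P : pred T) :
  [forall u, P u] = [forall u, P (s u)].
Proof.
apply/forallP/forallP => h u; first exact: h.
by rewrite -(permKV s u); exact: h.
Qed.

Lemma iso_lev p (R S : prel p) : poset_iso R S -> forall a, #|lvl (levR R) a| = #|lvl (levR S) a|.
Proof.
case/existsP => s /forallP hs a.
have hlt x y : ltR S (s x) (s y) = ltR R x y.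
  by move: (hs x) => /forallP /(_ y) /eqP; rewrite /ltR (inj_eq (@perm_inj _ s)) => ->.
have hl x : levR S (s x) = levR R x.
  rewrite /levR /wlev /isminb.
  rewrite (forall_perm s (fun u => ~~ ltR S u (s x))).
  rewrite (forall_perm s (fun u => ~~ ltR S (s x) u)).
  have e1 : [forall u, ~~ ltR S (s u) (s x)] = [forall u, ~~ ltR R u x] by apply: eq_forallb => u; rewrite hlt.
  have e2 : [forall u, ~~ ltR S (s x) (s u)] = [forall u, ~~ ltR R x u] by apply: eq_forallb => u; rewrite hlt.
  by rewrite e1 e2.
rewrite -(card_imset _ (@perm_inj _ s)); apply: eq_card => y.
rewrite !inE; apply/imsetP/idP.
  by case=> x; rewrite inE => hx ->; rewrite hl.
move=> hy; exists ((s^-1)%g y); first by rewrite inE -hl permKV.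
by rewrite permKV.
Qed.

Lemma struct p (R : prel p) : 1 < p -> is_porder R -> narcs R = amax p -> R = wrel (levR R).
Proof.
move=> p1 hR hn.
have e2 : #|E2 R setT| = 2 * amax p by rewrite (E2T_card hR) hn.
have [A [A0 AT hA]] := mantel_eq hR p1 e2.
have lt_tr : forall x y z, ltR R x y -> ltR R y z -> ltR R x z.
  move=> x y z /andP[a xy] /andP[b yz]; rewrite /ltR (po_trans hR a b) /=.
  apply/eqP => exz; move: a xy; rewrite exz => a xy.
  by have := po_anti hR a b => e; rewrite e eqxx in xy.
have lt_irr : forall x, ltR R x x = false by move=> x; rewrite /ltR eqxx andbF.
have cov_lt : forall x y, covers R x y -> ltR R x y.
  by move=> x y c; rewrite /ltR (covers_R c) (covers_neq c).
have cov_no : forall x y w, covers R x y -> ltR R x w -> ltR R w y -> False.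
  move=> x y w /and3P[_ _ /negP h] /andP[a wx] /andP[b wy]; apply: h; apply/existsP; exists w.
  by rewrite a b eq_sym wx wy.
have diff_adj : forall x y, (x \in A) != (y \in A) -> covers R x y || covers R y x.
  by move=> x y s; have := hA x y; rewrite /adjR s.
have sideT : exists a, a \in A by case/set0Pn: A0 => a ha; exists a.
have sideF : exists b, b \notin A.
  case: (boolP [exists b, b \notin A]) => [/existsP //|]; rewrite negb_exists => /forallP h.
  exfalso; move/negP: AT; apply; apply/eqP/setP => v; rewrite inE; move: (h v); by rewrite negbK.
apply/ffunP => -[x y]; rewrite ffunE /=.
case: (eqVneq x y) => [->|xy] /=; first exact: po_refl hR y.
have := wlev_char lt_tr lt_irr cov_lt cov_no diff_adj sideT sideF xy.
by rewrite /ltR xy andbT /levR.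
Qed.

Lemma iso_refl p (R : prel p) : poset_iso R R.
Proof. by apply/existsP; exists 1%g; apply/forallP => x; apply/forallP => y; rewrite !perm1. Qed.

Lemma iso_sym p (R S : prel p) : poset_iso R S -> poset_iso S R.
Proof.
case/existsP => s /forallP hs; apply/existsP; exists (s^-1)%g; apply/forallP => x; apply/forallP => y.
by move: (hs ((s^-1)%g x)) => /forallP /(_ ((s^-1)%g y)); rewrite !permKV eq_sym.
Qed.

Lemma iso_trans p (R S U : prel p) : poset_iso R S -> poset_iso S U -> poset_iso R U.
Proof.
case/existsP => s /forallP hs; case/existsP => t /forallP ht.
apply/existsP; exists (s * t)%g; apply/forallP => x; apply/forallP => y.
rewrite !permM; move: (ht (s x)) => /forallP /(_ (s y)) /eqP ->.
by move: (hs x) => /forallP /(_ y).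
Qed.

Lemma iso_equiv p : equivalence_rel (@poset_iso p).
Proof.
move=> x y z; split; first exact: iso_refl.
move=> hxy; apply/idP/idP => h.
  exact: iso_trans (iso_sym hxy) h.
exact: iso_trans hxy h.
Qed.

Lemma count_classes (T : finType) (r : rel T) (D : {set T}) k (g : 'I_k -> T) :
  equivalence_rel r ->
  (forall i, g i \in D) -> (forall i j, r (g i) (g j) -> i = j) ->
  (forall x, x \in D -> exists i, r x (g i)) ->
  #|equivalence_partition r D| = k.
Proof.
move=> eqr gD ginj gsurj.
have -> : equivalence_partition r D = [set [set y in D | r (g i) y] | i : 'I_k].
  apply/setP => B; apply/imsetP/imsetP.
    case=> x xD ->; have [i hi] := gsurj x xD; exists i => //.
    apply/setP => y; rewrite !inE; case: (y \in D) => //=.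
    by have [_ ] := eqr x (g i) y; move/(_ hi).
  case=> i _ ->; by exists (g i).
rewrite card_imset ?card_ord // => i j eij.
apply: ginj; have : g j \in [set y in D | r (g i) y] by rewrite eij inE gD /=; case: (eqr (g j) (g j) (g j)).
by rewrite inE => /andP[].
Qed.

Lemma amax_split p : exists m, (p = m + m /\ amax p = m * m /\ odd p = false /\ p./2 = m)
   \/ (p = (m + m).+1 /\ amax p = m * m + m /\ odd p = true /\ p./2 = m).
Proof.
exists p./2; have e := odd_double_half p; set m := p./2 in e *; rewrite -addnn in e.
case: (odd p) e => /= e; [right|left]; (split; [lia|]); rewrite /amax; split => //.
  have -> : p ^ 2 = (m * m + m) * 4 + 1 by rewrite -e -mulnn; nia.
  rewrite divnMDl // divn_small // addn0; by [].
- have -> : p ^ 2 = m * m * 4 by rewrite -e; nia.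
  by rewrite mulnK.
Qed.

Lemma q1 x d m : x + d = m + m -> x * d = m * m -> x = m.
Proof. move=> h1 h2. have: x <= m \/ m <= x by lia. case=> h.
 have [y ?] : exists y, m = x + y by exists (m - x); lia. subst. have ? : d = x + y + y by lia. subst. nia.
 have [y ?] : exists y, x = m + y by exists (x - m); lia. subst. have ? : m = d + y by lia. subst. nia. Qed.
Lemma q2 x d m : x + d = (m + m).+1 -> x * d = m * m + m -> x = m \/ x = m.+1.
Proof. move=> h1 h2. have: x <= m \/ m.+1 <= x by lia. case=> h.
 have [y ?] : exists y, m = x + y by exists (m - x); lia. subst. have ? : d = (x + y + y).+1 by lia. subst. nia.
 have [y ?] : exists y, x = m.+1 + y by exists (x - m.+1); lia. subst. have ? : m = d + y by lia. subst. nia. Qed.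

Lemma quad p x : x <= p -> x * (p - x) = amax p -> x = p./2 \/ x = p - p./2.
Proof.
move=> le; have hd : x + (p - x) = p by lia.
move: (p - x) hd => d hd h.
case: (amax_split p) => m [[ep [ea [_ ->]]] | [ep [ea [_ ->]]]]; rewrite ea ep in h hd *.
- by left; apply: (q1 hd h).
- case: (q2 hd h) => ->; [left|right]; lia.
Qed.

Definition C0 p i := if odd p then (if i == 0 then p./2 else if i == 1 then p./2.+1
   else if i <= p./2.+1 then i.-1 else i - p./2.+1) else (if i == 0 then p./2 else i).
Definition C1 p i := if odd p then (if i <= 1 then 0 else if i <= p./2.+1 then p./2 else p./2.+1)
   else (if i == 0 then 0 else p./2).
Definition kk p := if odd p then p else p./2.

Lemma C_ok p i : 1 < p -> i < kk p ->
  [/\ 1 <= C0 p i, C0 p i + C1 p i < p &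
   (if C1 p i == 0 then C0 p i * (p - C0 p i) else C1 p i * (p - C1 p i)) = amax p].
Proof.
move=> p1 hi.
case: (amax_split p) => m [[ep [ea [eo eh]]] | [ep [ea [eo eh]]]];
  rewrite /C0 /C1 eo ?eh ea /=; rewrite /kk eo ?eh in hi; subst p;
  repeat case: ifP => /eqP ?; split; try lia; rewrite /= ?eqxx /=; nia.
Qed.

Lemma C_inj p i j : 1 < p -> i < kk p -> j < kk p -> C0 p i = C0 p j -> C1 p i = C1 p j -> i = j.
Proof.
move=> p1 hi hj.
case: (amax_split p) => m [[ep [ea [eo eh]]] | [ep [ea [eo eh]]]];
  rewrite /C0 /C1 eo ?eh /=; rewrite /kk eo ?eh in hi hj; subst p;
  repeat case: ifP => ?; lia.
Qed.

Lemma C_surj p c0 c1 : 1 < p -> 1 <= c0 -> c0 + c1 < p ->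
  (if c1 == 0 then c0 * (p - c0) else c1 * (p - c1)) = amax p ->
  exists i, [/\ i < kk p, C0 p i = c0 & C1 p i = c1].
Proof.
move=> p1 h0 h01.
case: ifP => [/eqP e1 | /eqP n1] h.
- have := quad (ltnW (leq_ltn_trans (leq_addr c1 c0) h01)) h.
  case: (amax_split p) => m [[ep [ea [eo eh]]] | [ep [ea [eo eh]]]];
    rewrite eh ep => hq; subst p.
  + exists 0; rewrite /C0 /C1 /kk eo eh /=; split; lia.
  + case: hq => hq.
      exists 0; rewrite /C0 /C1 /kk eo eh /=; split; lia.
    exists 1; rewrite /C0 /C1 /kk eo eh /=; split; lia.
- have := quad (ltnW (leq_ltn_trans (leq_addl c0 c1) h01)) h.
  case: (amax_split p) => m [[ep [ea [eo eh]]] | [ep [ea [eo eh]]]];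
    rewrite eh ep => hq; subst p.
  + exists c0; rewrite /C0 /C1 /kk eo eh /=; split; repeat case: ifP => ?; lia.
  + case: hq => hq.
      exists c0.+1; rewrite /C0 /C1 /kk eo eh /=; split; repeat case: ifP => ?; lia.
    exists (c0 + m.+1); rewrite /C0 /C1 /kk eo eh /=; split; repeat case: ifP => ?; lia.
Qed.

Lemma card_lt p c : c <= p -> #|[set x : 'I_p | x < c]| = c.
Proof.
move=> cp.
have -> : [set x : 'I_p | x < c] = [set widen_ord cp y | y : 'I_c].
  apply/setP => x; rewrite inE; apply/idP/imsetP.
    by move=> xc; exists (Ordinal xc) => //; apply: val_inj.
  by case=> y _ ->; rewrite /= ltn_ord.
rewrite card_imset ?card_ord // => a b /(congr1 val) /= e; exact: val_inj.
Qed.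

Lemma lvl_sum p (L : 'I_p -> nat) : (forall x, L x <= 2) ->
  #|lvl L 0| + #|lvl L 1| + #|lvl L 2| = p.
Proof.
move=> hL.
have d01 : lvl L 0 :&: lvl L 1 = set0 by apply/setP => x; rewrite !inE; case: (L x) => [|[]].
have d2 : (lvl L 0 :|: lvl L 1) :&: lvl L 2 = set0.
  by apply/setP => x; rewrite !inE; case: (L x) => [|[|[]]].
have U : (lvl L 0 :|: lvl L 1) :|: lvl L 2 = setT.
  apply/setP => x; rewrite !inE; have := hL x; by case: (L x) => [|[|[|]]].
have := cardsUI (lvl L 0) (lvl L 1); rewrite d01 cards0 addn0 => <-.
have := cardsUI (lvl L 0 :|: lvl L 1) (lvl L 2); rewrite d2 cards0 addn0 => <-.
by rewrite U cardsT card_ord.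
Qed.

Lemma lvl_big p (L : 'I_p -> nat) a : (forall x, L x <= 2) -> 2 < a -> #|lvl L a| = 0.
Proof.
move=> hL a2; apply/eqP; rewrite cards_eq0; apply/eqP/setP => x; rewrite !inE.
apply/negP => /eqP e; have := hL x; rewrite e; lia.
Qed.

Definition cl p c0 c1 (x : 'I_p) : nat := if x < c0 then 0 else if x < c0 + c1 then 1 else 2.

Lemma cl_le2 p c0 c1 (x : 'I_p) : cl c0 c1 x <= 2.
Proof. by rewrite /cl; case: ifP => //; case: ifP. Qed.

Lemma cl_counts p c0 c1 : c0 + c1 <= p ->
  [/\ #|lvl (@cl p c0 c1) 0| = c0, #|lvl (@cl p c0 c1) 1| = c1 & #|lvl (@cl p c0 c1) 2| = p - c0 - c1].
Proof.
move=> h.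
have e0 : lvl (@cl p c0 c1) 0 = [set x : 'I_p | x < c0].
  by apply/setP => x; rewrite !inE /cl; case: ifP => //; case: ifP.
have e1 : lvl (@cl p c0 c1) 1 = [set x : 'I_p | x < c0 + c1] :\: [set x : 'I_p | x < c0].
  apply/setP => x; rewrite !inE /cl; case h1: (x < c0); case h2: (x < c0 + c1) => //=.
have c0' : #|lvl (@cl p c0 c1) 0| = c0 by rewrite e0 card_lt //; lia.
have c1' : #|lvl (@cl p c0 c1) 1| = c1.
  have sub : [set x : 'I_p | x < c0] \subset [set x : 'I_p | x < c0 + c1].
    by apply/subsetP => x; rewrite !inE; lia.
  rewrite e1 cardsD (setIidPr sub) !card_lt; lia.
split => //; have := lvl_sum (@cl_le2 p c0 c1); rewrite c0' c1'; lia.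
Qed.

Lemma lev_wrel p (L : 'I_p -> nat) : (forall x, L x <= 2) -> (exists x, L x = 0) -> (exists x, L x = 2) ->
  forall x, levR (wrel L) x = L x.
Proof.
move=> hL [x0 h0] [x2 h2] x.
rewrite /levR /wlev /isminb /ltR.
have m1 : [forall u, ~~ (wrel L (u, x) && (u != x))] = (L x == 0).
  apply/forallP/idP => [h|/eqP e u]; last by rewrite ffunE /= e /=; case: eqP.
  apply: contraT => nz; move: (h x0); rewrite ffunE /= h0 lt0n nz orbT /=.
  by case: eqP => // e; move: nz; rewrite -e h0.
have m2 : [forall u, ~~ (wrel L (x, u) && (x != u))] = (L x == 2).
  apply/forallP/idP => [h|/eqP e u]; last by rewrite ffunE /= e; case: eqP => //= _; have := hL u; lia.
  apply: contraT => nz; move: (h x2); rewrite ffunE /= h2.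
  have -> : L x < 2 by have := hL x; lia.
  by rewrite orbT /=; case: eqP => // e; move: nz; rewrite e h2.
rewrite m1 m2; have := hL x; case: (L x) => [|[|[|]]] //.
Qed.

Lemma part1 p a : 1 <= p -> a < p - 1 -> Hc p a = 0.
Proof.
move=> p1 ha; rewrite /Hc.
have -> : [set R : prel p | [&& is_porder R, narcs R == a & hasse_connected R]] = set0.
  apply/setP => R; rewrite !inE; apply/negP => /and3P[_ /eqP na hc].
  pose r : 'I_p := Ordinal p1.
  have := @conn_narcs p R r.
  have h : forall v, connect (adjR R) v r.
    by move=> v; move/forallP: hc => /(_ v) /forallP /(_ r).
  move=> /(_ h); lia.
by rewrite /equivalence_partition imset0 cards0.
Qed.

Lemma narcs_le p (R : prel p) : is_porder R -> narcs R <= amax p.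
Proof. move=> hR; have := mantel hR setT; rewrite (E2T_card hR) cardsT card_ord; lia. Qed.

Lemma part2 p a : amax p < a -> H p a = 0.
Proof.
move=> ha; rewrite /H.
have -> : [set R : prel p | is_porder R && (narcs R == a)] = set0.
  apply/setP => R; rewrite !inE; apply/negP => /andP[hR /eqP na].
  have := narcs_le hR; lia.
by rewrite /equivalence_partition imset0 cards0.
Qed.

Lemma amax_bounds n : 4 * amax n <= n * n /\ n * n < 4 * amax n + 4.
Proof.
rewrite /amax -mulnn; have := divn_eq (n * n) 4; have := ltn_pmod (n * n) (isT : 0 < 4).
move: (n * n %/ 4) (n * n %% 4) => q r; lia.
Qed.

Lemma amax_super q r : 1 <= q -> 1 <= r -> amax q + amax r <= amax (q + r - 1).
Proof.
move=> q1 r1.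
have a1 : amax 1 = 0 by [].
case: (eqVneq q 1) => [->|q2]; first by rewrite a1 add0n; have -> : 1 + r - 1 = r by lia.
case: (eqVneq r 1) => [->|r2]; first by rewrite a1 addn0; have -> : q + 1 - 1 = q by lia.
have [q' ->] : exists q', q = q'.+2 by exists (q - 2); lia.
have [r' ->] : exists r', r = r'.+2 by exists (r - 2); lia.
have -> : q'.+2 + r'.+2 - 1 = (q' + r').+3 by lia.
have [b1 _] := amax_bounds q'.+2; have [b2 _] := amax_bounds r'.+2; have [_ b3] := amax_bounds (q' + r').+3.
move: (amax q'.+2) (amax r'.+2) (amax (q' + r').+3) b1 b2 b3 => x y z; nia.
Qed.

Lemma disconn p (R : prel p) : is_porder R -> ~~ hasse_connected R -> narcs R <= amax (p - 1).
Proof.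
move=> hR; rewrite /hasse_connected negb_forall => /existsP[x]; rewrite negb_forall => /existsP[y nxy].
pose C := [set v | connect (adjR R) x v].
have clo u v : adjR R u v -> connect (adjR R) x u = connect (adjR R) x v.
  move=> auv; apply/idP/idP => h.
    exact: connect_trans h (connect1 auv).
  by apply: connect_trans h (connect1 _); rewrite adjR_sym.
have U : E2 R setT = E2 R C :|: E2 R (~: C).
  apply/setP => -[u v]; rewrite !inE /=.
  case auv: (adjR R u v) => //=; rewrite (clo _ _ auv); by case: (connect (adjR R) x v).
have I : E2 R C :&: E2 R (~: C) = set0.
  by apply/setP => -[u v]; rewrite !inE /=; case: (connect (adjR R) x u); rewrite ?andbF.
have := cardsUI (E2 R C) (E2 R (~: C)); rewrite -U I cards0 addn0 (E2T_card hR) => e.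
have m1 := mantel hR C; have m2 := mantel hR (~: C).
have cC := cardsC C; rewrite card_ord in cC.
have xC : x \in C by rewrite inE connect0.
have yC : y \in ~: C by rewrite !inE.
have c1 : 1 <= #|C| by apply/card_gt0P; exists x.
have c2 : 1 <= #|~: C| by apply/card_gt0P; exists y.
have := amax_super c1 c2; rewrite cC.
move: (amax #|C|) (amax #|~: C|) m1 m2 => s t m1 m2; lia.
Qed.

Lemma part3 p a : amax (p - 1) < a -> H p a = Hc p a.
Proof.
move=> ha; rewrite /H /Hc; congr (#|equivalence_partition _ _|); apply/setP => R; rewrite !inE.
case hR: (is_porder R) => //=; case: (eqVneq (narcs R) a) => //= na.
apply/esym/negPn/negP => nc; have := disconn hR nc; lia.
Qed.

Lemma lvl_ext p (L1 L2 : 'I_p -> nat) a : (forall x, L1 x = L2 x) -> lvl L1 a = lvl L2 a.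
Proof. by move=> h; apply/setP => x; rewrite !inE h. Qed.

Lemma wlev_le2 p (R : prel p) x : levR R x <= 2.
Proof. by rewrite /levR /wlev; case: ifP => //; case: ifP. Qed.

Lemma part4_1 : H 1 (amax 1) = 1.
Proof.
rewrite /H.
apply: (@count_classes _ _ _ 1 (fun _ => wrel (fun _ : 'I_1 => 0))).
- exact: iso_equiv.
- move=> i; rewrite inE wrel_porder /=; apply/eqP.
  rewrite /narcs; apply/eqP; rewrite cards_eq0; apply/eqP/setP => -[x y].
  by rewrite !inE (ord1 x) (ord1 y) /covers eqxx.
- by move=> i j _; rewrite (ord1 i) (ord1 j).
- move=> R; rewrite inE => /andP[hR _]; exists ord0.
  apply/existsP; exists 1%g; apply/forallP => x; apply/forallP => y.
  by rewrite !perm1 ffunE (ord1 x) (ord1 y) eqxx /= (po_refl hR).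
Qed.

Lemma part4_2 p : 1 < p -> H p (amax p) = kk p.
Proof.
move=> p1; rewrite /H.
pose g (i : 'I_(kk p)) := wrel (@cl p (C0 p i) (C1 p i)).
have x0 : 0 < p by lia.
have lev_g (i : 'I_(kk p)) : forall x, levR (g i) x = @cl p (C0 p i) (C1 p i) x.
  have [h0 h01 hf] := C_ok p1 (ltn_ord i).
  apply: lev_wrel; first exact: cl_le2.
    by exists (Ordinal x0); rewrite /cl /=; case: ifP => //; lia.
  have xm : p.-1 < p by lia.
  by exists (Ordinal xm); rewrite /cl /=; case: ifP; [lia|case: ifP => //; lia].
apply: (@count_classes _ _ _ (kk p) g).
- exact: iso_equiv.
- move=> i; rewrite inE wrel_porder /=; apply/eqP.
  have [h0 h01 hf] := C_ok p1 (ltn_ord i).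
  have [e0 e1 e2] := @cl_counts p (C0 p i) (C1 p i) (ltnW h01).
  rewrite narcs_wrel ?e0 ?e1 ?e2; last exact: cl_le2.
  rewrite -hf; move: (C0 p i) (C1 p i) h0 h01 => c0 c1 h0 h01.
  have [d ->] : exists d, p = c0 + c1 + d.+1 by exists (p - c0 - c1).-1; lia.
  have -> : c0 + c1 + d.+1 - c0 - c1 = d.+1 by lia.
  have -> : c0 + c1 + d.+1 - c0 = c1 + d.+1 by lia.
  have -> : c0 + c1 + d.+1 - c1 = c0 + d.+1 by lia.
  case: eqP => [->|_]; nia.
- move=> i j /iso_lev hl; apply: val_inj; apply: (C_inj p1 (ltn_ord i) (ltn_ord j)).
  + have := hl 0; rewrite !(lvl_ext _ (lev_g _)).
    have [h0 h01 _] := C_ok p1 (ltn_ord i); have [h0' h01' _] := C_ok p1 (ltn_ord j).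
    have [-> _ _] := @cl_counts p (C0 p i) (C1 p i) (ltnW h01).
    by have [-> _ _] := @cl_counts p (C0 p j) (C1 p j) (ltnW h01').
  + have := hl 1; rewrite !(lvl_ext _ (lev_g _)).
    have [h0 h01 _] := C_ok p1 (ltn_ord i); have [h0' h01' _] := C_ok p1 (ltn_ord j).
    have [_ -> _] := @cl_counts p (C0 p i) (C1 p i) (ltnW h01).
    by have [_ -> _] := @cl_counts p (C0 p j) (C1 p j) (ltnW h01').
- move=> R; rewrite inE => /andP[hR /eqP na].
  have eR := struct p1 hR na.
  set L := levR R in eR.
  have hL : forall x, L x <= 2 by move=> x; exact: wlev_le2.
  have eRxy x y : R (x, y) = (x == y) || (L x < L y) by rewrite {1}eR ffunE.
  have sum := lvl_sum hL.
  have nf := na; rewrite {1}eR (narcs_wrel hL) in nf.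
  have am1 : 1 <= amax p by rewrite /amax leq_divRL //; nia.
  have [c0p c2p] : 1 <= #|lvl L 0| /\ 1 <= #|lvl L 2|.
    case: (eqVneq #|lvl L 1| 0) => [e|n].
      by move: nf; rewrite e eqxx => nf; split; nia.
    have : 0 < #|lvl L 1| by rewrite lt0n.
    case/card_gt0P => x; rewrite inE => /eqP Lx.
    have [nm nM] : isminb (ltR R) x = false /\ isminb (fun a b => ltR R b a) x = false.
      move: Lx; rewrite /L /levR /wlev; case: ifP => //; case: ifP => //.
    split.
    - move/negbT: nm; rewrite /isminb negb_forall => /existsP[u]; rewrite negbK /ltR eRxy Lx.
      case/andP => /orP[/eqP -> |lu]; first by rewrite eqxx.
      move=> _; apply/card_gt0P; exists u; rewrite inE; apply/eqP; lia.
    - move/negbT: nM; rewrite /isminb negb_forall => /existsP[u]; rewrite negbK /ltR eRxy Lx.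
      case/andP => /orP[/eqP -> |lu]; first by rewrite eqxx.
      move=> _; apply/card_gt0P; exists u; rewrite inE; apply/eqP; have := hL u; lia.
  have hf : (if #|lvl L 1| == 0 then #|lvl L 0| * (p - #|lvl L 0|)
             else #|lvl L 1| * (p - #|lvl L 1|)) = amax p.
    rewrite -nf; move: #|lvl L 0| #|lvl L 1| #|lvl L 2| sum c0p c2p => a b c s _ _.
    have -> : p - a = b + c by lia.
    have -> : p - b = a + c by lia.
    case: (eqVneq b 0) => [->|nb]; rewrite ?eqxx ?(negbTE nb); nia.
  have hlt : #|lvl L 0| + #|lvl L 1| < p by lia.
  have s2 : #|lvl L 2| = p - #|lvl L 0| - #|lvl L 1| by lia.
  have [i [hi e0 e1]] := C_surj p1 c0p hlt hf.
  exists (Ordinal hi); rewrite {1}eR; apply: wrel_iso => a.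
  have [h0 h01 _] := C_ok p1 hi.
  have [f0 f1 f2] := @cl_counts p (C0 p i) (C1 p i) (ltnW h01).
  case: a => [|[|[|a]]] /=.
  + by rewrite f0 e0.
  + by rewrite f1 e1.
  + by rewrite f2 e0 e1 s2.
  + by rewrite !lvl_big //; exact: cl_le2.
Qed.


Theorem lemma2 (p : nat) (hp : 1 <= p) :
  (forall a : nat, a < p - 1 -> Hc p a = 0) /\
  (forall a : nat, amax p < a -> H p a = 0) /\
  H p (amax p) = (if odd p then p else p %/ 2) /\
  (forall a : nat, amax (p - 1) < a <= amax p -> H p a = Hc p a).
Proof.
split; first by move=> a; exact: part1 hp.
split; first by move=> a; exact: part2.
split.
  case: (eqVneq p 1) => [->|p1]; first exact: part4_1.
  rewrite part4_2; last by lia.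
  by rewrite /kk divn2.
by move=> a /andP[h1 _]; exact: part3 h1.
Qed.
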